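(* Let $\Phi(z,w)=\sum_{n,m=0}^\infty a_{nm}z^nw^m$ be an entire function on $\mathbb{C}^2$ (the series converging on all of $\mathbb{C}^2$), and define $\varphi(\zeta)=\Phi(\zeta,\bar\zeta)=\sum_{n,m\ge0}a_{nm}\zeta^n\bar\zeta^m$ for $\zeta\in\mathbb{C}$. Let $\Delta=\{|\zeta|\le1\}$, $\Gamma=\{|\zeta|=1\}$, $\gamma=\{(\zeta,\varphi(\zeta)):\zeta\in\Gamma\}\subset\mathbb{C}^2$ and $\Sigma=\{(\zeta,\varphi(\zeta)):\zeta\in\Delta\}\subset\mathbb{C}^2$. If $\Sigma\subset\widehat\gamma$, where $\widehat\gamma$ is the projective hull of $\gamma$, then $\varphi$ is a holomorphic function of $\zeta$ on $\operatorname{int}\Delta$ (in particular on $\operatorname{int}\Delta\setminus\{0\}$, with a removable singularity at $\zeta=0$).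
   Context: For a compact set $X\subset\mathbb{C}^n$, let $\mathcal{P}_d$ denote the space of complex polynomials on $\mathbb{C}^n$ of degree at most $d$. The projective hull $\widehat X$ of $X$ is the set of points $x\in\mathbb{C}^n$ for which there exists a constant $C_x$ such that $|P(x)|\le (C_x)^d\sup_X|P|$ for all $P\in\mathcal{P}_d$ and all $d\ge0$. *)

(* Defs.v *)
From Stdlib Require Import Reals.
From Coquelicot Require Import Coquelicot.
Open Scope R_scope.

Definition Cpw (z : C) (n : nat) : C := @pow_n C_Ring z n.

Definition poly2 (d : nat) (c : nat -> nat -> C) (p : C * C) : C :=
  @sum_n C_AbelianMonoid
    (fun i => @sum_n C_AbelianMonoid
       (fun j => Cmult (c i j) (Cmult (Cpw (fst p) i) (Cpw (snd p) j))) (d - i))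
    d.

(* x lies in the projective hull of X: there is a constant Cx with
   |P(x)| <= Cx^d * sup_X |P| for every P of degree <= d and every d.
   "sup_X |P|" is expressed through its upper bounds M. *)
Definition in_proj_hull (X : C * C -> Prop) (x : C * C) : Prop :=
  exists Cx : R, forall (d : nat) (c : nat -> nat -> C) (M : R),
    (forall y, X y -> Cmod (poly2 d c y) <= M) ->
    Cmod (poly2 d c x) <= Cx ^ d * M.

Definition dpsum (a : nat -> nat -> C) (z w : C) (N : nat) : C :=
  @sum_n C_AbelianMonoid
    (fun n => @sum_n C_AbelianMonoid
       (fun m => Cmult (a n m) (Cmult (Cpw z n) (Cpw w m))) N) N.

Definition dpsum_abs (a : nat -> nat -> C) (z w : C) (N : nat) : R :=
  @sum_n R_AbelianMonoid
    (fun n => @sum_n R_AbelianMonoid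
       (fun m => Cmod (a n m) * (Cmod z ^ n * Cmod w ^ m)) N) N.

Definition holomorphic_on (U : C -> Prop) (f : C -> C) : Prop :=
  forall z, U z -> @ex_derive C_AbsRing C_NormedModule f z.

(* Main.v *)
Require Import Defs.
From Stdlib Require Import Reals.
From Coquelicot Require Import Coquelicot.
From Stdlib Require Import Lra Lia Psatz.
Open Scope R_scope.

Notation SC := (@sum_n C_AbelianMonoid).
Notation SR := (@sum_n R_AbelianMonoid).
Ltac toC := match goal with |- @eq _ ?a ?b => change (@eq C a b) end.
Ltac toR := match goal with |- @eq _ ?a ?b => change (@eq R a b) end.
Ltac cring := first [toC; ring | ring].
Ltac rring := toR; ring.
Definition DS (f : nat -> nat -> C) N : C := SC (fun n => SC (fun m => f n m) N) N.
Definition DR (g : nat -> nat -> R) N : R := SR (fun n => SR (fun m => g n m) N) N.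

Lemma SC_0 f : @eq C (SC f 0) (f 0%nat). Proof. exact (sum_O f). Qed.
Lemma SC_S f n : @eq C (SC f (S n)) (SC f n + f (S n))%C. Proof. exact (sum_Sn f n). Qed.
Lemma SR_0 f : SR f 0 = f 0%nat. Proof. exact (sum_O f). Qed.
Lemma SR_S f n : SR f (S n) = SR f n + f (S n). Proof. exact (sum_Sn f n). Qed.

Lemma SC_ext f g N : (forall i, (i <= N)%nat -> f i = g i) -> @eq C (SC f N) (SC g N).
Proof. intros; apply sum_n_ext_loc; auto. Qed.
Lemma SR_ext f g N : (forall i, (i <= N)%nat -> f i = g i) -> SR f N = SR g N.
Proof. intros; apply sum_n_ext_loc; auto. Qed.

Lemma SC_plus f g N : @eq C (SC (fun i => f i + g i)%C N) (SC f N + SC g N)%C.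
Proof. induction N. rewrite !SC_0; auto. rewrite !SC_S, IHN. cring. Qed.
Lemma SC_minus f g N : @eq C (SC (fun i => f i - g i)%C N) (SC f N - SC g N)%C.
Proof. induction N. rewrite !SC_0; auto. rewrite !SC_S, IHN. cring. Qed.
Lemma SC_scal c f N : @eq C (SC (fun i => c * f i)%C N) (c * SC f N)%C.
Proof. induction N. rewrite !SC_0; auto. rewrite !SC_S, IHN. cring. Qed.
Lemma SC_zero N : @eq C (SC (fun _ : nat => (0:C)) N) 0.
Proof. induction N. rewrite !SC_0; auto. rewrite !SC_S, IHN. cring. Qed.
Lemma SR_plus f g N : SR (fun i => f i + g i) N = SR f N + SR g N.
Proof. induction N. rewrite !SR_0; auto. rewrite !SR_S, IHN. rring. Qed.
Lemma SR_scal c f N : SR (fun i => c * f i) N = c * SR f N.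
Proof. induction N. rewrite !SR_0; auto. rewrite !SR_S, IHN. rring. Qed.
Lemma SR_le f g N : (forall i, (i <= N)%nat -> f i <= g i) -> SR f N <= SR g N.
Proof. induction N; intros H. rewrite !SR_0; auto. rewrite !SR_S.
  apply Rplus_le_compat; auto. Qed.
Lemma SR_nonneg f N : (forall i, (i <= N)%nat -> 0 <= f i) -> 0 <= SR f N.
Proof. induction N; intros H. rewrite !SR_0; auto. rewrite !SR_S.
  apply Rplus_le_le_0_compat; auto. Qed.
Lemma Cmod_SC f N : Cmod (SC f N) <= SR (fun i => Cmod (f i)) N.
Proof. induction N. rewrite SC_0, SR_0; lra. rewrite SC_S, SR_S.
  eapply Rle_trans. apply Cmod_triangle. lra. Qed.
Lemma SR_mono f N N' : (forall i, 0 <= f i) -> (N <= N')%nat -> SR f N <= SR f N'.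
Proof. intros H; induction 1. lra. rewrite SR_S. specialize (H (S m)); lra. Qed.
Lemma SR_term f N i : (forall i, 0 <= f i) -> (i <= N)%nat -> f i <= SR f N.
Proof. intros H Hi. destruct i. eapply Rle_trans; [|apply SR_mono; eauto; lia].
  rewrite SR_0; lra.
  eapply Rle_trans; [|apply SR_mono; eauto]. rewrite SR_S.
  pose proof (SR_nonneg f i (fun j _ => H j)). lra. Qed.

Lemma SC_ind (g : nat -> C) e N : (e <= N)%nat ->
  @eq C (SC (fun i => if Nat.eqb i e then g i else (0:C)) N) (g e).
Proof. induction N; intros He.
  - rewrite SC_0. assert (e = 0%nat) by lia. subst. reflexivity.
  - rewrite SC_S. destruct (Nat.eq_dec e (S N)).
    + subst. rewrite Nat.eqb_refl.
      rewrite (SC_ext _ (fun _ : nat => (0:C))). rewrite SC_zero. cring.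
      intros i Hi. destruct (Nat.eqb_spec i (S N)); [lia|auto].
    + rewrite IHN by lia. destruct (Nat.eqb_spec (S N) e); [lia|]. cring.
Qed.

Lemma DS_plus f g N : @eq C (DS (fun n m => f n m + g n m)%C N) (DS f N + DS g N)%C.
Proof. unfold DS. rewrite <- SC_plus. apply SC_ext; intros. apply SC_plus. Qed.
Lemma DS_minus f g N : @eq C (DS (fun n m => f n m - g n m)%C N) (DS f N - DS g N)%C.
Proof. unfold DS. rewrite <- SC_minus. apply SC_ext; intros. apply SC_minus. Qed.
Lemma DS_scal c f N : @eq C (DS (fun n m => c * f n m)%C N) (c * DS f N)%C.
Proof. unfold DS. rewrite <- SC_scal. apply SC_ext; intros. apply SC_scal. Qed.
Lemma DS_ext f g N : (forall n m, (n <= N)%nat -> (m <= N)%nat -> f n m = g n m) -> @eq C (DS f N) (DS g N).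
Proof. intros H. unfold DS. apply SC_ext; intros. apply SC_ext; intros. auto. Qed.
Lemma DR_le f g N : (forall n m, (n <= N)%nat -> (m <= N)%nat -> f n m <= g n m) -> DR f N <= DR g N.
Proof. intros H. unfold DR. apply SR_le; intros. apply SR_le; intros. auto. Qed.
Lemma DR_scal c f N : DR (fun n m => c * f n m) N = c * DR f N.
Proof. unfold DR. rewrite <- SR_scal. apply SR_ext; intros. apply SR_scal. Qed.
Lemma Cmod_DS f N : Cmod (DS f N) <= DR (fun n m => Cmod (f n m)) N.
Proof. unfold DS, DR. eapply Rle_trans. apply Cmod_SC. apply SR_le; intros. apply Cmod_SC. Qed.
Lemma DS_single (x : C) p q N : (p <= N)%nat -> (q <= N)%nat ->
  @eq C (DS (fun n m => if andb (Nat.eqb n p) (Nat.eqb m q) then x else (0:C)) N) x.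
Proof. intros. unfold DS.
  rewrite (SC_ext _ (fun n => if Nat.eqb n p then x else (0:C))). apply (SC_ind (fun _ => x)); auto.
  intros i Hi. destruct (Nat.eqb i p) eqn:E; simpl.
  apply (SC_ind (fun _ => x)); auto. apply SC_zero. Qed.

Lemma Cpw_0 (z : C) : Cpw z 0 = 1%C. Proof. reflexivity. Qed.
Lemma Cpw_S (z : C) n : Cpw z (S n) = (z * Cpw z n)%C. Proof. reflexivity. Qed.
Lemma Cpw_plus (z : C) n m : Cpw z (n + m) = (Cpw z n * Cpw z m)%C.
Proof. induction n; cbn [Nat.add]. rewrite Cpw_0. ring. rewrite !Cpw_S, IHn. ring. Qed.
Lemma Cpw_mult (z w : C) n : Cpw (z * w) n = (Cpw z n * Cpw w n)%C.
Proof. induction n. rewrite !Cpw_0. ring. rewrite !Cpw_S, IHn. ring. Qed.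
Lemma Cmod_Cpw (z : C) n : Cmod (Cpw z n) = Cmod z ^ n.
Proof. induction n. rewrite Cpw_0, Cmod_1; simpl; auto. rewrite Cpw_S, Cmod_mult, IHn; simpl; auto. Qed.
Lemma Cpw_R (r : R) n : Cpw (RtoC r) n = RtoC (r ^ n).
Proof. induction n. reflexivity. rewrite Cpw_S, IHn. change (r ^ S n) with (r * r ^ n). rewrite RtoC_mult. reflexivity. Qed.
Lemma Cpw_conj (z : C) n : Cpw (Cconj z) n = Cconj (Cpw z n).
Proof. induction n. rewrite !Cpw_0. apply injective_projections; simpl; ring.
  rewrite !Cpw_S, IHn, Cmult_conj. reflexivity. Qed.
Lemma Cpw_Cpw (z : C) a b : Cpw (Cpw z a) b = Cpw z (a * b).
Proof. induction b. rewrite Nat.mul_0_r. reflexivity.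
  rewrite Cpw_S, IHb. replace (a * S b)%nat with (a + a * b)%nat by lia. rewrite Cpw_plus. reflexivity. Qed.
Lemma Cpw_nz (z : C) n : z <> 0%C -> Cpw z n <> 0%C.
Proof. intros Hz H. apply (f_equal Cmod) in H. rewrite Cmod_Cpw, Cmod_0 in H.
  apply Cmod_gt_0 in Hz. apply pow_lt with (n:=n) in Hz. lra. Qed.

Lemma lim_C (u : nat -> C) l : filterlim u eventually (locally l) ->
  forall eps, 0 < eps -> exists N0, forall n, (N0 <= n)%nat -> Cmod (u n - l) < eps.
Proof. intros H eps He. pose proof (proj1 (@filterlim_locally_ball_norm C_AbsRing nat C_NormedModule eventually _ u l) H) as H'. clear H. rename H' into H.
  destruct (H (mkposreal _ He)) as [N0 HN]. exists N0. intros n Hn. apply HN in Hn. exact Hn. Qed.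

Lemma DS_shell f K : @eq C (DS f (S K))
  (DS f K + SC (fun n => f n (S K)) K + SC (fun m => f (S K) m) (S K))%C.
Proof. unfold DS. rewrite SC_S.
  rewrite (SC_ext (fun n => SC (fun m => f n m) (S K)) (fun n => SC (fun m => f n m) K + f n (S K))%C).
  rewrite SC_plus. cring. intros; apply SC_S. Qed.
Lemma DR_shell f K : DR f (S K) =
  DR f K + SR (fun n => f n (S K)) K + SR (fun m => f (S K) m) (S K).
Proof. unfold DR. rewrite SR_S.
  rewrite (SR_ext (fun n => SR (fun m => f n m) (S K)) (fun n => SR (fun m => f n m) K + f n (S K))).
  rewrite SR_plus. rring. intros; apply SR_S. Qed.
Lemma DR_ext_eq f g N : (forall n m, f n m = g n m) -> DR f N = DR g N.
Proof. intros H. unfold DR. apply SR_ext; intros. apply SR_ext; intros. auto. Qed.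
Lemma DR_nonneg f N : (forall n m, 0 <= f n m) -> 0 <= DR f N.
Proof. intros H. unfold DR. apply SR_nonneg; intros. apply SR_nonneg; auto. Qed.

Lemma DS_diff f g N N' : (N <= N')%nat -> (forall n m, 0 <= g n m) ->
  (forall n m, (N < n \/ N < m)%nat -> Cmod (f n m) <= g n m) ->
  Cmod (DS f N' - DS f N) <= DR g N'.
Proof. intros HN Hg Hf. induction HN.
  - replace (DS f N - DS f N)%C with (RtoC 0) by ring. rewrite Cmod_0. apply DR_nonneg; auto.
  - rewrite DS_shell, DR_shell.
    replace (DS f m + SC (fun n => f n (S m)) m + SC (fun m0 => f (S m) m0) (S m) - DS f N)%C
      with ((DS f m - DS f N) + (SC (fun n => f n (S m)) m + SC (fun m0 => f (S m) m0) (S m)))%C by ring.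
    eapply Rle_trans. apply Cmod_triangle.
    assert (H1: Cmod (SC (fun n => f n (S m)) m + SC (fun m0 => f (S m) m0) (S m))
       <= SR (fun n => g n (S m)) m + SR (fun m0 => g (S m) m0) (S m)).
    { eapply Rle_trans. apply Cmod_triangle. apply Rplus_le_compat.
      eapply Rle_trans. apply Cmod_SC. apply SR_le; intros. apply Hf; lia.
      eapply Rle_trans. apply Cmod_SC. apply SR_le; intros. apply Hf; lia. }
    lra.
Qed.

Lemma aux_pow x y rho Rr n m K : 0 <= x <= rho -> 0 <= y <= rho -> 1 <= Rr -> (K <= n + m)%nat ->
  x ^ n * y ^ m <= (Rr * rho) ^ n * (Rr * rho) ^ m / Rr ^ K.
Proof. intros Hx Hy HR HK.
  assert (HRp : 0 < Rr ^ K) by (apply pow_lt; lra).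
  assert (HRS: Rr ^ K <= Rr ^ n * Rr ^ m). { rewrite <- pow_add. apply Rle_pow; auto. }
  assert (x ^ n <= rho ^ n) by (apply pow_incr; lra).
  assert (y ^ m <= rho ^ m) by (apply pow_incr; lra).
  assert (0 <= x ^ n) by (apply pow_le; lra). assert (0 <= y ^ m) by (apply pow_le; lra).
  apply Rmult_le_reg_r with (Rr ^ K); auto.
  replace ((Rr * rho) ^ n * (Rr * rho) ^ m / Rr ^ K * Rr ^ K) with ((Rr*rho)^n*(Rr*rho)^m) by (field; lra).
  rewrite !Rpow_mult_distr.
  assert (0 <= rho ^ n) by (apply pow_le; lra). assert (0 <= rho ^ m) by (apply pow_le; lra).
  apply Rle_trans with (rho ^ n * rho ^ m * Rr ^ K). apply Rmult_le_compat_r. lra.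
  apply Rmult_le_compat; auto.
  replace (Rr ^ n * rho ^ n * (Rr ^ m * rho ^ m)) with (rho ^ n * rho ^ m * (Rr ^ n * Rr ^ m)) by ring.
  apply Rmult_le_compat_l. nra. auto.
Qed.

Lemma DR_dpsum_abs a (x : R) N : 0 <= x ->
  dpsum_abs a (RtoC x) (RtoC x) N = DR (fun n m => Cmod (a n m) * (x ^ n * x ^ m)) N.
Proof. intros Hx. unfold dpsum_abs, DR. rewrite Cmod_R, Rabs_pos_eq by auto. reflexivity. Qed.

Lemma dpsum_diff a z w rho Rr B N N' : 0 <= rho -> 1 <= Rr ->
  Cmod z <= rho -> Cmod w <= rho ->
  (forall K, dpsum_abs a (RtoC (Rr * rho)) (RtoC (Rr * rho)) K <= B) ->
  (N <= N')%nat -> Cmod (dpsum a z w N' - dpsum a z w N) <= B / Rr ^ (S N).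
Proof. intros Hr HR Hz Hw HB HN.
  assert (HRp : 0 < Rr ^ S N) by (apply pow_lt; lra).
  change (dpsum a z w N') with (DS (fun n m => a n m * (Cpw z n * Cpw w m))%C N').
  change (dpsum a z w N) with (DS (fun n m => a n m * (Cpw z n * Cpw w m))%C N).
  eapply Rle_trans. apply DS_diff with (g := fun n m => Cmod (a n m) * ((Rr*rho)^n * (Rr*rho)^m / Rr ^ S N)); auto.
  - intros. apply Rmult_le_pos. apply Cmod_ge_0.
    apply Rmult_le_pos. apply Rmult_le_pos; apply pow_le; nra. left; apply Rinv_0_lt_compat; auto.
  - intros n m Hnm. rewrite !Cmod_mult, !Cmod_Cpw.
    apply Rmult_le_compat_l. apply Cmod_ge_0. apply aux_pow; auto.
    split; auto; apply Cmod_ge_0. split; auto; apply Cmod_ge_0. lia.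
  - rewrite (DR_ext_eq (fun n m => Cmod (a n m) * ((Rr * rho) ^ n * (Rr * rho) ^ m / Rr ^ S N))
      (fun n m => / Rr ^ S N * (Cmod (a n m) * ((Rr * rho) ^ n * (Rr * rho) ^ m)))).
    rewrite DR_scal, <- DR_dpsum_abs by nra. specialize (HB N').
    unfold Rdiv. rewrite (Rmult_comm B). apply Rmult_le_compat_l. left; apply Rinv_0_lt_compat; auto. auto.
    intros; unfold Rdiv; ring.
Qed.

Lemma phi_tail a z w l rho Rr B N : 0 <= rho -> 1 <= Rr ->
  Cmod z <= rho -> Cmod w <= rho ->
  (forall K, dpsum_abs a (RtoC (Rr * rho)) (RtoC (Rr * rho)) K <= B) ->
  filterlim (dpsum a z w) eventually (locally l) ->
  Cmod (l - dpsum a z w N) <= B / Rr ^ (S N).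
Proof. intros Hr HR Hz Hw HB Hl. apply le_epsilon. intros eps He.
  destruct (lim_C _ _ Hl eps He) as [N0 HN0].
  specialize (HN0 (max N0 N) (Nat.le_max_l _ _)).
  pose proof (dpsum_diff a z w rho Rr B N (max N0 N) Hr HR Hz Hw HB (Nat.le_max_r _ _)).
  replace (l - dpsum a z w N)%C with ((dpsum a z w (max N0 N) - dpsum a z w N) - (dpsum a z w (max N0 N) - l))%C by cring.
  eapply Rle_trans. apply Cmod_triangle. rewrite Cmod_opp. lra.
Qed.

Lemma SC_two (f : nat -> C) K : (forall j, (2 <= j)%nat -> f j = 0%C) -> (K = 0%nat -> f 1%nat = 0%C) ->
  @eq C (SC f K) (f 0%nat + f 1%nat)%C.
Proof. intros H1 H2. destruct K. rewrite SC_0, H2 by auto. cring.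
  induction K. rewrite SC_S, SC_0. reflexivity. rewrite SC_S, IHK, (H1 (S (S K))) by lia. cring. Qed.

Lemma SC_switch (F : nat -> nat -> C) m n :
  @eq C (SC (fun i => SC (fun j => F i j) n) m) (SC (fun j => SC (fun i => F i j) m) n).
Proof. exact (sum_n_switch F m n). Qed.

Definition coefQ (a : nat -> nat -> C) N i : C :=
  DS (fun n m => if Nat.eqb i (n + N - m) then a n m else (0:C)) N.
Definition cQ (a : nat -> nat -> C) N i j : C :=
  if Nat.eqb j 0 then (- coefQ a N i)%C
  else if andb (Nat.eqb j 1) (Nat.eqb i N) then (1:C) else (0:C).

Lemma poly2_Q a N z w : poly2 (2 * N + 1) (cQ a N) (z, w) =
  (Cpw z N * w - DS (fun n m => a n m * Cpw z (n + N - m)) N)%C.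
Proof.
  unfold poly2. simpl fst; simpl snd.
  rewrite (SC_ext _ (fun i => - (coefQ a N i * Cpw z i) + (if Nat.eqb i N then Cpw z i * w else (0:C)))%C).
  2:{ intros i Hi. rewrite SC_two.
      - unfold cQ. simpl. change (@one C_Ring) with (RtoC 1). change (@mult C_Ring) with Cmult.
        destruct (Nat.eqb i N) eqn:E; simpl; cring.
      - intros j Hj. unfold cQ. destruct (Nat.eqb_spec j 0); [lia|]. destruct (Nat.eqb_spec j 1); [lia|]. simpl. cring.
      - intros HK. unfold cQ. simpl. destruct (Nat.eqb_spec i N); [lia|]. simpl. cring. }
  rewrite SC_plus.
  rewrite (SC_ext (fun i => if Nat.eqb i N then Cpw z i * w else (0:C))%C (fun i => if Nat.eqb i N then Cpw z N * w else (0:C))%C).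
  2:{ intros i _. destruct (Nat.eqb_spec i N); subst; auto. }
  rewrite (SC_ind (fun _ => Cpw z N * w)%C) by lia.
  rewrite (SC_ext (fun i => - (coefQ a N i * Cpw z i))%C (fun i => (-1) * (coefQ a N i * Cpw z i))%C) by (intros; cring).
  rewrite SC_scal.
  assert (E: @eq C (SC (fun i => coefQ a N i * Cpw z i)%C (2 * N + 1)) (DS (fun n m => a n m * Cpw z (n + N - m)) N)%C).
  { unfold coefQ, DS.
    rewrite (SC_ext _ (fun i => SC (fun n => SC (fun m => (if Nat.eqb i (n + N - m) then a n m * Cpw z i else (0:C))) N) N)%C).
    2:{ intros i _. rewrite Cmult_comm, <- SC_scal. apply SC_ext; intros n _. rewrite <- SC_scal. apply SC_ext; intros m _.
        destruct (Nat.eqb i (n + N - m)); cring. }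
    rewrite SC_switch. apply SC_ext; intros n Hn. rewrite SC_switch. apply SC_ext; intros m Hm.
    rewrite (SC_ext _ (fun i => if Nat.eqb i (n + N - m) then a n m * Cpw z (n + N - m) else (0:C))%C).
    apply (SC_ind (fun _ => a n m * Cpw z (n + N - m))%C). lia.
    intros i _. destruct (Nat.eqb_spec i (n + N - m)); subst; auto. }
  rewrite E. cring.
Qed.

Definition Lsum (a : nat -> nat -> C) (z : C) N : C := DS (fun n m => a n m * (Cpw z n / Cpw z m))%C N.

Lemma Ct_conj_1 (t : C) : Cmod t = 1 -> (t * Cconj t)%C = 1%C.
Proof. intros H. rewrite <- Cmod2_conj, H. simpl. apply injective_projections; simpl; ring. Qed.

Lemma unit_pow (t : C) n m N : Cmod t = 1 -> (m <= N)%nat ->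
  Cpw t (n + N - m) = (Cpw t N * (Cpw t n * Cpw (Cconj t) m))%C.
Proof. intros Ht Hm.
  assert (E: Cpw t (n + N - m) = (Cpw t (n + N - m) * Cpw (t * Cconj t) m)%C).
  { rewrite Ct_conj_1 by auto. replace (Cpw 1 m) with (RtoC 1). cring.
    induction m. reflexivity. rewrite Cpw_S, <- IHm by lia. cring. }
  rewrite E, Cpw_mult. replace (Cpw t (n + N - m) * (Cpw t m * Cpw (Cconj t) m))%C
    with (Cpw t (n + N - m + m) * Cpw (Cconj t) m)%C by (rewrite Cpw_plus; cring).
  replace (n + N - m + m)%nat with (N + n)%nat by lia. rewrite Cpw_plus. cring.
Qed.

Lemma nz_pow (z : C) n m N : z <> 0%C -> (m <= N)%nat ->
  Cpw z (n + N - m) = (Cpw z N * (Cpw z n / Cpw z m))%C.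
Proof. intros Hz Hm. pose proof (Cpw_nz z m Hz).
  assert (E: (Cpw z (n + N - m) * Cpw z m)%C = (Cpw z N * Cpw z n)%C).
  { rewrite <- !Cpw_plus. f_equal. lia. }
  replace (Cpw z (n + N - m)) with ((Cpw z (n + N - m) * Cpw z m) / Cpw z m)%C by (field; auto).
  rewrite E. field. auto.
Qed.

Lemma dpsum_abs_nonneg a z w N : 0 <= dpsum_abs a z w N.
Proof. apply DR_nonneg. intros. apply Rmult_le_pos. apply Cmod_ge_0.
  apply Rmult_le_pos; apply pow_le; apply Cmod_ge_0. Qed.

Definition gam (phi : C -> C) := fun p : C * C => exists t : C, Cmod t = 1 /\ p = (t, phi t).

Lemma hull_bound a phi
  (Hphi : forall zeta : C, filterlim (dpsum a zeta (Cconj zeta)) eventually (locally (phi zeta)))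
  (z : C) Cx Rr B N :
  1 <= Rr ->
  (forall K, dpsum_abs a (RtoC (Rr * 1)) (RtoC (Rr * 1)) K <= B) ->
  (forall (d : nat) (c : nat -> nat -> C) (M : R),
      (forall y, gam phi y -> Cmod (poly2 d c y) <= M) ->
      Cmod (poly2 d c (z, phi z)) <= Cx ^ d * M) ->
  z <> 0%C ->
  Cmod z ^ N * Cmod (phi z - Lsum a z N) <= Cx ^ (2 * N + 1) * (B / Rr ^ S N).
Proof. intros HR HB HC Hz.
  assert (E1: (Cpw z N * (phi z - Lsum a z N))%C = poly2 (2 * N + 1) (cQ a N) (z, phi z)).
  { rewrite poly2_Q.
    rewrite (DS_ext (fun n m => a n m * Cpw z (n + N - m))%C (fun n m => Cpw z N * (a n m * (Cpw z n / Cpw z m)))%C).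
    rewrite DS_scal. unfold Lsum. cring. intros n m Hn Hm. rewrite nz_pow by auto. cring. }
  rewrite <- Cmod_Cpw, <- Cmod_mult, E1. apply HC.
  intros y [t [Ht ->]]. rewrite poly2_Q.
  rewrite (DS_ext (fun n m => a n m * Cpw t (n + N - m))%C (fun n m => Cpw t N * (a n m * (Cpw t n * Cpw (Cconj t) m)))%C).
  2:{ intros n m Hn Hm. rewrite unit_pow by auto. cring. }
  rewrite DS_scal. change (DS (fun n m => a n m * (Cpw t n * Cpw (Cconj t) m))%C N) with (dpsum a t (Cconj t) N).
  replace (Cpw t N * phi t - Cpw t N * dpsum a t (Cconj t) N)%C with (Cpw t N * (phi t - dpsum a t (Cconj t) N))%C by cring.
  rewrite Cmod_mult, Cmod_Cpw, Ht, pow1, Rmult_1_l.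
  apply (phi_tail a t (Cconj t) (phi t) 1 Rr B N); auto; try lra. rewrite Cmod_conj; lra.
Qed.

Lemma hull_lim a phi
  (Hentire : forall z w : C, exists B : R, forall N : nat, dpsum_abs a z w N <= B)
  (Hphi : forall zeta : C, filterlim (dpsum a zeta (Cconj zeta)) eventually (locally (phi zeta)))
  (Hhull : forall zeta : C, Cmod zeta <= 1 ->
      in_proj_hull (fun p : C * C => exists t : C, Cmod t = 1 /\ p = (t, phi t)) (zeta, phi zeta))
  (z : C) : 0 < Cmod z <= 1 ->
  forall eps, 0 < eps -> exists N0, forall N, (N0 <= N)%nat -> Cmod (phi z - Lsum a z N) <= eps.
Proof. intros [Hr1 Hr2] eps He.
  destruct (Hhull z Hr2) as [Cx HC].
  set (r := Cmod z) in *. set (K := Rabs Cx).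
  assert (HK: 0 <= K) by apply Rabs_pos.
  set (Rr := 2 * (K * K + 1) / r + 1).
  assert (HRr: 1 <= Rr). { unfold Rr. assert (0 < 2 * (K * K + 1) / r). apply Rdiv_lt_0_compat; nra. lra. }
  destruct (Hentire (RtoC (Rr*1)) (RtoC (Rr*1))) as [B HB].
  assert (HB0: 0 <= B) by (eapply Rle_trans; [apply dpsum_abs_nonneg|apply (HB 0%nat)]).
  assert (Hz: z <> 0%C). { intro E. unfold r in Hr1. rewrite E, Cmod_0 in Hr1. lra. }
  assert (key: forall N, Cmod (phi z - Lsum a z N) <= K * B / Rr * (/2) ^ N).
  { intros N. pose proof (hull_bound a phi Hphi z Cx Rr B N HRr HB HC Hz) as H.
    assert (H1: Cx ^ (2 * N + 1) <= K ^ (2 * N + 1)).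
    { unfold K. rewrite RPow_abs. apply Rle_abs. }
    assert (HRp: 0 < Rr ^ S N) by (apply pow_lt; lra).
    assert (H2: Cmod z ^ N * Cmod (phi z - Lsum a z N) <= K ^ (2 * N + 1) * (B / Rr ^ S N)).
    { eapply Rle_trans. apply H. apply Rmult_le_compat_r. apply Rdiv_le_0_compat; lra. auto. }
    assert (HrN: 0 < r ^ N) by (apply pow_lt; lra).
    apply Rmult_le_reg_l with (r ^ N); auto. fold r in H2. eapply Rle_trans. apply H2.
    assert (H3: K * K <= Rr * r * / 2).
    { unfold Rr. replace ((2 * (K * K + 1) / r + 1) * r * / 2) with ((K * K + 1) + r / 2) by (field; lra). lra. }
    assert (H4: (K * K) ^ N <= (Rr * r * / 2) ^ N) by (apply pow_incr; nra).
    replace (K ^ (2 * N + 1) * (B / Rr ^ S N)) with (K * B / Rr * ((K * K) ^ N / Rr ^ N)).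
    2:{ rewrite pow_add, pow_mult, pow_1. replace (K ^ 2) with (K * K) by ring.
        change (Rr ^ S N) with (Rr * Rr ^ N). field. split. apply pow_nonzero; lra. lra. }
    replace (r ^ N * (K * B / Rr * (/ 2) ^ N)) with (K * B / Rr * ((Rr * r * / 2) ^ N / Rr ^ N)).
    2:{ rewrite !Rpow_mult_distr. field. split; [lra| apply pow_nonzero; lra]. }
    apply Rmult_le_compat_l. apply Rdiv_le_0_compat; nra.
    unfold Rdiv. apply Rmult_le_compat_r. left; apply Rinv_0_lt_compat, pow_lt; lra. auto. }
  set (A := K * B / Rr). assert (HA: 0 <= A) by (unfold A; apply Rdiv_le_0_compat; nra).
  destruct (pow_lt_1_zero (/2) ltac:(rewrite Rabs_pos_eq; lra) (eps / (A + 1)) ltac:(apply Rdiv_lt_0_compat; lra)) as [N0 HN0].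
  exists N0. intros N HN. eapply Rle_trans. apply key.
  specialize (HN0 N HN). rewrite Rabs_pos_eq in HN0 by (apply pow_le; lra). fold A.
  apply Rle_trans with (A * (eps / (A + 1))). apply Rmult_le_compat_l; lra.
  apply Rmult_le_reg_r with (A + 1); [lra|]. replace (A * (eps / (A + 1)) * (A + 1)) with (A * eps) by (field; lra). nra.
Qed.

Lemma cos_lt_1 x : 0 < x < 2 * PI -> cos x < 1.
Proof. intros Hx. replace x with (2 * (x / 2)) by field. rewrite cos_2a_sin.
  assert (0 < sin (x / 2)) by (apply sin_gt_0; lra). nra. Qed.

Definition cis (x : R) : C := (cos x, sin x).
Lemma cis_mult x y : (cis x * cis y)%C = cis (x + y).
Proof. unfold cis. apply injective_projections; simpl; rewrite ?cos_plus, ?sin_plus; ring. Qed.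
Lemma Cmod_cis x : Cmod (cis x) = 1.
Proof. unfold cis, Cmod; simpl fst; simpl snd.
  replace (cos x ^ 2 + sin x ^ 2) with (Rsqr (sin x) + Rsqr (cos x)) by (unfold Rsqr; ring).
  rewrite sin2_cos2. apply sqrt_1. Qed.
Lemma Cpw_cis x k : Cpw (cis x) k = cis (x * INR k).
Proof. induction k. simpl. unfold cis. rewrite Rmult_0_r, cos_0, sin_0. reflexivity.
  rewrite Cpw_S, IHk, cis_mult, S_INR. f_equal. ring. Qed.

Definition om (M : nat) : C := cis (2 * PI / INR M).

Lemma om_M M : (0 < M)%nat -> Cpw (om M) M = 1%C.
Proof. intros HM. unfold om. rewrite Cpw_cis. replace (2 * PI / INR M * INR M) with (2 * PI).
  unfold cis. rewrite cos_2PI, sin_2PI. reflexivity. field. apply not_0_INR; lia. Qed.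

Lemma om_ne1 M k : (0 < k < M)%nat -> Cpw (om M) k <> 1%C.
Proof. intros Hk E. unfold om in E. rewrite Cpw_cis in E. apply (f_equal fst) in E. unfold cis in E; simpl in E.
  assert (0 < 2 * PI / INR M * INR k < 2 * PI).
  { assert (0 < INR k) by (apply lt_0_INR; lia). assert (INR k < INR M) by (apply lt_INR; lia).
    pose proof PI_RGT_0. split. apply Rmult_lt_0_compat; auto. apply Rdiv_lt_0_compat; lra.
    replace (2 * PI / INR M * INR k) with (2 * PI * (INR k / INR M)) by (field; lra).
    rewrite <- (Rmult_1_r (2 * PI)) at 2. apply Rmult_lt_compat_l. lra.
    apply Rmult_lt_reg_r with (INR M). lra. unfold Rdiv. rewrite Rmult_assoc, Rinv_l by lra. lra. }
  pose proof (cos_lt_1 _ H). lra. Qed.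

Lemma Cmod_om M : Cmod (om M) = 1.
Proof. apply Cmod_cis. Qed.

Lemma conj_ne1 (z : C) : z <> 1%C -> Cconj z <> 1%C.
Proof. intros H E. apply H. apply (f_equal Cconj) in E. rewrite Cconj_conj in E. rewrite E.
  apply injective_projections; simpl; ring. Qed.

Lemma geo_sum (u : C) n : ((u - 1) * SC (Cpw u) n)%C = (Cpw u (S n) - 1)%C.
Proof. induction n. rewrite SC_0. rewrite !Cpw_S, Cpw_0. cring.
  rewrite SC_S, Cmult_plus_distr_l, IHn. rewrite (Cpw_S u (S n)). cring. Qed.

Lemma geo_zero (u : C) M : (0 < M)%nat -> Cpw u M = 1%C -> u <> 1%C -> @eq C (SC (Cpw u) (M - 1)) 0.
Proof. intros HM H1 H2. pose proof (geo_sum u (M - 1)). replace (S (M - 1)) with M in H by lia.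
  rewrite H1 in H. replace (1 - 1)%C with (RtoC 0) in H by cring.
  destruct (Ceq_dec (SC (Cpw u) (M - 1)) 0) as [E|E]; auto. exfalso.
  assert (u - 1 <> 0)%C. { intro E'. apply H2. replace u with ((u - 1) + 1)%C by cring. rewrite E'. cring. }
  apply (Cmult_neq_0 _ _ H0 E). auto. Qed.

Definition Kr M e1 e2 : C :=
  (/ INR M * SC (Cpw (Cpw (om M) e1 * Cpw (Cconj (om M)) e2)) (M - 1))%C.

Lemma om_conj M : (om M * Cconj (om M))%C = 1%C.
Proof. rewrite <- Cmod2_conj, Cmod_om. apply injective_projections; simpl; ring. Qed.

Lemma Kr_diag M e : (0 < M)%nat -> Kr M e e = 1%C.
Proof. intros HM. unfold Kr. rewrite <- Cpw_mult, om_conj.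
  assert (E: forall k, Cpw (RtoC 1) k = RtoC 1). { induction k. reflexivity. rewrite Cpw_S, IHk. cring. }
  rewrite E. rewrite (SC_ext _ (fun _ => RtoC 1)) by (intros; apply E).
  assert (E2: forall n, SC (fun _ => RtoC 1) n = RtoC (INR (S n))).
  { induction n. rewrite SC_0. reflexivity. rewrite SC_S, IHn, (S_INR (S n)). rewrite RtoC_plus. reflexivity. }
  rewrite E2. replace (S (M - 1)) with M by lia.
  apply injective_projections; simpl; field; apply not_0_INR; lia. Qed.

Lemma Cpw_one k : Cpw (RtoC 1) k = RtoC 1.
Proof. induction k. reflexivity. rewrite Cpw_S, IHk. cring. Qed.

Lemma Kr_off M e1 e2 : (0 < M)%nat -> e1 <> e2 -> (e1 < e2 + M)%nat -> (e2 < e1 + M)%nat ->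
  Kr M e1 e2 = 0%C.
Proof. intros HM H1 H2 H3. unfold Kr.
  assert (Hu: exists k, (0 < k < M)%nat /\
     ((Cpw (om M) e1 * Cpw (Cconj (om M)) e2)%C = Cpw (om M) k \/
      (Cpw (om M) e1 * Cpw (Cconj (om M)) e2)%C = Cpw (Cconj (om M)) k)).
  { destruct (Nat.lt_ge_cases e2 e1).
    - exists (e1 - e2)%nat. split. lia. left.
      replace e1 with ((e1 - e2) + e2)%nat at 1 by lia. rewrite Cpw_plus.
      rewrite <- Cmult_assoc, <- Cpw_mult, om_conj, Cpw_one. cring.
    - exists (e2 - e1)%nat. split. lia. right.
      replace e2 with ((e2 - e1) + e1)%nat at 1 by lia. rewrite Cpw_plus.
      replace (Cpw (om M) e1 * (Cpw (Cconj (om M)) (e2 - e1) * Cpw (Cconj (om M)) e1))%C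
        with (Cpw (Cconj (om M)) (e2 - e1) * (Cpw (om M) e1 * Cpw (Cconj (om M)) e1))%C by cring.
      rewrite <- Cpw_mult, om_conj, Cpw_one. cring. }
  destruct Hu as [k [Hk [E|E]]]; rewrite E, geo_zero; try cring; auto.
  - rewrite Cpw_Cpw, (Nat.mul_comm k M), <- (Cpw_Cpw (om M) M k), om_M by auto. apply Cpw_one.
  - apply om_ne1; auto.
  - rewrite Cpw_Cpw, (Nat.mul_comm k M), <- (Cpw_Cpw _ M k), Cpw_conj, om_M by auto.
    replace (Cconj 1) with (RtoC 1). apply Cpw_one.
    apply injective_projections; simpl; ring.
  - rewrite Cpw_conj. apply conj_ne1, om_ne1; auto.
Qed.

Lemma Kr_bound M e1 e2 : (0 < M)%nat -> Cmod (Kr M e1 e2) <= 1.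
Proof. intros HM. unfold Kr. rewrite Cmod_mult.
  assert (HMp: 0 < INR M) by (apply lt_0_INR; auto).
  rewrite Cmod_inv by (intro E; apply RtoC_inj in E; lra). rewrite Cmod_R, Rabs_pos_eq by lra.
  eapply Rle_trans. apply Rmult_le_compat_l. left; apply Rinv_0_lt_compat; auto. apply Cmod_SC.
  rewrite (SR_ext _ (fun _ => 1)).
  assert (E2: forall n, SR (fun _ => 1) n = INR (S n)).
  { induction n. rewrite SR_0. reflexivity. rewrite SR_S, IHn, (S_INR (S n)). reflexivity. }
  rewrite E2. replace (S (M - 1)) with M by lia. rewrite Rinv_l; lra.
  intros i _. rewrite Cmod_Cpw, Cmod_mult, Cmod_Cpw, Cmod_Cpw, Cmod_conj, Cmod_om, !pow1, Rmult_1_l, pow1. reflexivity.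
Qed.

Definition Dfun (a : nat -> nat -> C) (z : C) N : C :=
  DS (fun n m => a n m * (Cpw z n * Cpw (Cconj z) m - Cpw z n / Cpw z m))%C N.

Lemma Dfun_eq a z N : Dfun a z N = (dpsum a z (Cconj z) N - Lsum a z N)%C.
Proof. change (dpsum a z (Cconj z) N) with (DS (fun n m => a n m * (Cpw z n * Cpw (Cconj z) m))%C N).
  unfold Dfun, Lsum. rewrite <- DS_minus. apply DS_ext; intros. cring. Qed.

Lemma conj_R (r : R) : Cconj (RtoC r) = RtoC r.
Proof. apply injective_projections; simpl; ring. Qed.

Lemma zeta_pow r (w : C) l n : Cpw (RtoC r * Cpw w l)%C n = (RtoC (r ^ n) * Cpw (Cpw w n) l)%C.
Proof. rewrite Cpw_mult, Cpw_R, !Cpw_Cpw, Nat.mul_comm. reflexivity. Qed.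
Lemma zeta_cpow r M l m : Cpw (Cconj (RtoC r * Cpw (om M) l))%C m = (RtoC (r ^ m) * Cpw (Cpw (Cconj (om M)) m) l)%C.
Proof. rewrite Cmult_conj, conj_R, <- Cpw_conj. apply zeta_pow. Qed.

Lemma om_inv M m l : (Cpw (Cpw (om M) m) l * Cpw (Cpw (Cconj (om M)) m) l)%C = 1%C.
Proof. rewrite <- Cpw_mult, <- Cpw_mult, om_conj, !Cpw_one. reflexivity. Qed.

Lemma term_eq (x : C) r M l n m : 0 < r ->
  (Cpw (RtoC r * Cpw (om M) l) n * Cpw (Cconj (RtoC r * Cpw (om M) l)) m
   - Cpw (RtoC r * Cpw (om M) l) n / Cpw (RtoC r * Cpw (om M) l) m)%C
  = (RtoC (r ^ n * (r ^ m - / r ^ m)) * Cpw (Cpw (om M) n * Cpw (Cconj (om M)) m) l)%C.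
Proof. intros Hr. rewrite !zeta_pow, zeta_cpow. rewrite Cpw_mult.
  pose proof (om_inv M m l) as E.
  assert (Hr' : r ^ m <> 0) by (apply pow_nonzero; lra).
  assert (Hw : Cpw (Cpw (om M) m) l <> 0%C). { intro E0. rewrite E0 in E. rewrite Cmult_0_l in E.
    apply (f_equal fst) in E. simpl in E. lra. }
  set (A := Cpw (Cpw (om M) m) l) in *. set (Bc := Cpw (Cpw (Cconj (om M)) m) l) in *.
  replace Bc with (/ A)%C.
  2:{ symmetry. replace Bc with (/A * (A * Bc))%C at 1 by (field; auto). rewrite E. cring. }
  rewrite RtoC_mult, RtoC_minus, RtoC_inv by auto. field. split; auto. intro E0. apply RtoC_inj in E0. auto.
Qed.

Lemma DS_switchL (F : nat -> nat -> nat -> C) L N :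
  @eq C (SC (fun l => DS (F l) N) L) (DS (fun n m => SC (fun l => F l n m) L) N).
Proof. unfold DS. rewrite SC_switch. apply SC_ext; intros n _. rewrite SC_switch. reflexivity. Qed.

Lemma fourier a r M p q N : 0 < r ->
  (/ INR M * SC (fun l => Cpw (Cpw (om M) q * Cpw (Cconj (om M)) p) l * Dfun a (RtoC r * Cpw (om M) l) N) (M - 1))%C
  = DS (fun n m => a n m * RtoC (r ^ n * (r ^ m - / r ^ m)) * Kr M (n + q) (m + p))%C N.
Proof. intros Hr. unfold Dfun.
  rewrite (SC_ext _ (fun l => DS (fun n m => a n m * RtoC (r ^ n * (r ^ m - / r ^ m)) *
       Cpw (Cpw (om M) (n + q) * Cpw (Cconj (om M)) (m + p)) l) N)%C).
  2:{ intros l _. rewrite <- DS_scal. apply DS_ext. intros n m _ _. rewrite term_eq by auto.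
      rewrite !Cpw_plus. rewrite !(Cpw_mult _ _ l). cring. }
  rewrite DS_switchL, <- DS_scal. apply DS_ext. intros n m _ _. unfold Kr.
  rewrite SC_scal. cring.
Qed.

Lemma pow_le1 x n : 0 <= x <= 1 -> x ^ n <= 1.
Proof. intros H. rewrite <- (pow1 n). apply pow_incr. lra. Qed.

Definition dlt p q n m : C := if Nat.eqb (n + q) (m + p) then (1:C) else (0:C).
Definition Gs (a : nat -> nat -> C) p q s N : C := DS (fun n m => dlt p q n m * a n m * RtoC (s ^ m - 1))%C N.
Definition cc (a : nat -> nat -> C) r n m : C := (a n m * RtoC (r ^ n * (r ^ m - / r ^ m)))%C.

Lemma main_rel (a : nat -> nat -> C) p q r N : 0 < r ->
  (RtoC (r ^ q) * DS (fun n m => cc a r n m * dlt p q n m)%C N)%C = (RtoC (r ^ p) * Gs a p q (r * r) N)%C.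
Proof. intros Hr. unfold Gs. rewrite <- !DS_scal. apply DS_ext. intros n m _ _.
  unfold cc, dlt. destruct (Nat.eqb_spec (n + q) (m + p)) as [E|E]; [|cring].
  assert (E2: r ^ q * r ^ n = r ^ p * r ^ m) by (rewrite <- !pow_add; f_equal; lia).
  assert (Hm: r ^ m <> 0) by (apply pow_nonzero; lra).
  assert (E3: r ^ q * (r ^ n * (r ^ m - / r ^ m)) = r ^ p * ((r * r) ^ m - 1)).
  { rewrite Rpow_mult_distr. replace (r ^ q * (r ^ n * (r ^ m - / r ^ m))) with ((r ^ q * r ^ n) * (r ^ m - / r ^ m)) by ring.
    rewrite E2. field. auto. }
  replace (RtoC (r ^ q) * (a n m * RtoC (r ^ n * (r ^ m - / r ^ m)) * 1))%C with (a n m * RtoC (r ^ q * (r ^ n * (r ^ m - / r ^ m))))%C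
    by (rewrite RtoC_mult; cring).
  rewrite E3, RtoC_mult. cring.
Qed.

Lemma Kr_split M e1 e2 : (0 < M)%nat ->
  Cmod (Kr M e1 e2 - (if Nat.eqb e1 e2 then (1:C) else (0:C)))%C <= 1 /\
  ((Kr M e1 e2 - (if Nat.eqb e1 e2 then (1:C) else (0:C)))%C <> 0%C -> (e2 + M <= e1 \/ e1 + M <= e2)%nat).
Proof. intros HM. destruct (Nat.eqb_spec e1 e2) as [E|E].
  - subst. rewrite Kr_diag by auto. replace (RtoC 1 - RtoC 1)%C with (RtoC 0) by cring. rewrite Cmod_0. split. lra.
    intros H; exfalso; apply H; reflexivity.
  - replace (Kr M e1 e2 - 0)%C with (Kr M e1 e2) by cring. split. apply Kr_bound; auto.
    intros H. destruct (Nat.lt_ge_cases e1 (e2 + M)); [|lia]. destruct (Nat.lt_ge_cases e2 (e1 + M)); [|lia].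
    exfalso. apply H. apply Kr_off; auto.
Qed.

Lemma off_bound (a : nat -> nat -> C) r Rr B M p q N : 0 < r <= 1 -> 1 <= Rr -> (0 < M)%nat ->
  (forall K, dpsum_abs a (RtoC (Rr * / r)) (RtoC (Rr * / r)) K <= B) ->
  Cmod (DS (fun n m => cc a r n m * (Kr M (n + q) (m + p) - dlt p q n m))%C N) <= B / Rr ^ (M - (p + q)).
Proof. intros Hr HR HM HB.
  assert (Hri: 1 <= / r). { rewrite <- Rinv_1. apply Rinv_le_contravar; lra. }
  eapply Rle_trans. apply Cmod_DS.
  eapply Rle_trans. apply DR_le with (g := fun n m => / Rr ^ (M - (p + q)) * (Cmod (a n m) * ((Rr * / r) ^ n * (Rr * / r) ^ m))).
  - intros n m _ _. unfold cc, dlt. destruct (Kr_split M (n + q) (m + p) HM) as [H1 H2].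
    rewrite !Cmod_mult.
    destruct (Ceq_dec (Kr M (n + q) (m + p) - (if Nat.eqb (n + q) (m + p) then (1:C) else (0:C)))%C 0) as [E|E].
    + rewrite E, Cmod_0, Rmult_0_r. apply Rmult_le_pos. left; apply Rinv_0_lt_compat, pow_lt; lra.
      apply Rmult_le_pos. apply Cmod_ge_0. apply Rmult_le_pos; apply pow_le; nra.
    + specialize (H2 E).
      assert (Hc: Cmod (RtoC (r ^ n * (r ^ m - / r ^ m))) <= (/ r) ^ n * (/ r) ^ m).
      { rewrite Cmod_R. assert (0 < r ^ m) by (apply pow_lt; lra). assert (r ^ m <= 1) by (apply pow_le1; lra).
        assert (1 <= / r ^ m). { rewrite <- Rinv_1. apply Rinv_le_contravar; lra. }
        assert (0 < r ^ n) by (apply pow_lt; lra). assert (r ^ n <= 1) by (apply pow_le1; lra).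
        assert (1 <= (/ r) ^ n) by (apply pow_R1_Rle; lra).
        rewrite Rabs_mult, Rabs_pos_eq by lra. rewrite Rabs_left1 by lra.
        rewrite (pow_inv r m). set (X := / r ^ m) in *. set (Y := (/ r) ^ n) in *.
        apply Rle_trans with (1 * X). apply Rmult_le_compat; lra. apply Rmult_le_compat_r; lra. }
      assert (Hp: (/ r) ^ n * (/ r) ^ m <= (Rr * / r) ^ n * (Rr * / r) ^ m / Rr ^ (M - (p + q))).
      { apply aux_pow; try lra. lia. }
      apply Rle_trans with (Cmod (a n m) * ((/ r) ^ n * (/ r) ^ m) * 1).
      apply Rmult_le_compat; try apply Cmod_ge_0. apply Rmult_le_pos; apply Cmod_ge_0.
      apply Rmult_le_compat_l. apply Cmod_ge_0. auto. auto.
      rewrite Rmult_1_r. unfold Rdiv in Hp.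
      replace (/ Rr ^ (M - (p + q)) * (Cmod (a n m) * ((Rr * / r) ^ n * (Rr * / r) ^ m)))
        with (Cmod (a n m) * ((Rr * / r) ^ n * (Rr * / r) ^ m * / Rr ^ (M - (p + q)))) by ring.
      apply Rmult_le_compat_l. apply Cmod_ge_0. auto.
  - rewrite DR_scal, <- DR_dpsum_abs. specialize (HB N). unfold Rdiv. rewrite Rmult_comm.
    apply Rmult_le_compat_r. left; apply Rinv_0_lt_compat, pow_lt; lra. auto.
    apply Rmult_le_pos. lra. left; apply Rinv_0_lt_compat; lra.
Qed.

Lemma avg_bound (a : nat -> nat -> C) r M p q N eps : (0 < M)%nat ->
  (forall l, (l <= M - 1)%nat -> Cmod (Dfun a (RtoC r * Cpw (om M) l)%C N) <= eps) ->
  Cmod (/ INR M * SC (fun l => Cpw (Cpw (om M) q * Cpw (Cconj (om M)) p) l * Dfun a (RtoC r * Cpw (om M) l) N) (M - 1))%C <= eps.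
Proof. intros HM H.
  assert (HMp: 0 < INR M) by (apply lt_0_INR; auto).
  rewrite Cmod_mult, Cmod_inv by (intro E; apply RtoC_inj in E; lra). rewrite Cmod_R, Rabs_pos_eq by lra.
  eapply Rle_trans. apply Rmult_le_compat_l. left; apply Rinv_0_lt_compat; auto. apply Cmod_SC.
  eapply Rle_trans. apply Rmult_le_compat_l. left; apply Rinv_0_lt_compat; auto.
  apply SR_le with (g := fun _ => eps).
  { intros l Hl. rewrite Cmod_mult, Cmod_Cpw, Cmod_mult, Cmod_Cpw, Cmod_Cpw, Cmod_conj, Cmod_om, !pow1, Rmult_1_l, pow1, Rmult_1_l.
    auto. }
  assert (E2: forall n, SR (fun _ => eps) n = INR (S n) * eps).
  { induction n. rewrite SR_0. simpl. rring. rewrite SR_S, IHn, (S_INR (S n)). rring. }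
  rewrite E2. replace (S (M - 1)) with M by lia. right. field. lra.
Qed.

Lemma radius_bound (a : nat -> nat -> C) r Rr B M p q N eps : 0 < r <= 1 -> 1 <= Rr -> (0 < M)%nat ->
  (forall K, dpsum_abs a (RtoC (Rr * / r)) (RtoC (Rr * / r)) K <= B) ->
  (forall l, (l <= M - 1)%nat -> Cmod (Dfun a (RtoC r * Cpw (om M) l)%C N) <= eps) ->
  r ^ p * Cmod (Gs a p q (r * r) N) <= r ^ q * (eps + B / Rr ^ (M - (p + q))).
Proof. intros Hr HR HM HB HD.
  pose proof (fourier a r M p q N (proj1 Hr)) as EF.
  pose proof (avg_bound a r M p q N eps HM HD) as HA. rewrite EF in HA.
  pose proof (off_bound a r Rr B M p q N Hr HR HM HB) as HO.
  assert (E: DS (fun n m => cc a r n m * dlt p q n m)%C N =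
     (DS (fun n m => a n m * RtoC (r ^ n * (r ^ m - / r ^ m)) * Kr M (n + q) (m + p))%C N
      - DS (fun n m => cc a r n m * (Kr M (n + q) (m + p) - dlt p q n m))%C N)%C).
  { rewrite <- DS_minus. apply DS_ext. intros. unfold cc. cring. }
  assert (Hrp: 0 < r ^ p) by (apply pow_lt; lra). assert (Hrq: 0 < r ^ q) by (apply pow_lt; lra).
  rewrite <- (Rabs_pos_eq (r ^ p)) by lra. rewrite <- Cmod_R, <- Cmod_mult, <- main_rel by lra.
  rewrite Cmod_mult, Cmod_R, Rabs_pos_eq by lra. apply Rmult_le_compat_l. lra.
  rewrite E. eapply Rle_trans. apply Cmod_triangle. rewrite Cmod_opp. lra.
Qed.

Lemma pow_decr x m n : 0 <= x <= 1 -> (m <= n)%nat -> x ^ n <= x ^ m.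
Proof. intros Hx Hmn. replace n with (m + (n - m))%nat by lia. rewrite pow_add.
  assert (0 <= x ^ m) by (apply pow_le; lra). assert (x ^ (n - m) <= 1) by (apply pow_le1; lra).
  assert (0 <= x ^ (n - m)) by (apply pow_le; lra). nra. Qed.

Lemma diff_bound (a : nat -> nat -> C) p q s1 s2 B1 N : 0 <= s2 <= s1 -> s1 <= 1 -> (p <= N)%nat -> (q <= N)%nat ->
  (forall n' m', (1 <= m')%nat -> (m' < q)%nat -> a n' m' = 0%C) ->
  (forall K, dpsum_abs a (RtoC 1) (RtoC 1) K <= B1) ->
  Cmod (Gs a p q s1 N - Gs a p q s2 N - a p q * RtoC (s1 ^ q - s2 ^ q))%C <= 2 * s1 ^ (S q) * B1.
Proof. intros Hs Hs1 Hp Hq IH HB.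
  rewrite <- (DS_single (a p q * RtoC (s1 ^ q - s2 ^ q))%C p q N) by auto.
  unfold Gs. rewrite <- !DS_minus.
  eapply Rle_trans. apply Cmod_DS.
  eapply Rle_trans. apply DR_le with (g := fun n m => 2 * s1 ^ (S q) * (Cmod (a n m) * (1 ^ n * 1 ^ m))).
  - intros n m _ _. rewrite !pow1, !Rmult_1_r.
    assert (Hpos: 0 <= 2 * s1 ^ S q * Cmod (a n m)) by (apply Rmult_le_pos; [apply Rmult_le_pos; [lra|apply pow_le; lra]|apply Cmod_ge_0]).
    unfold dlt. destruct (Nat.eqb_spec n p) as [En|En]; destruct (Nat.eqb_spec m q) as [Em|Em]; cbn [andb].
    + subst. rewrite (proj2 (Nat.eqb_eq _ _)) by lia.
      replace (1 * a p q * RtoC (s1 ^ q - 1) - 1 * a p q * RtoC (s2 ^ q - 1) - a p q * RtoC (s1 ^ q - s2 ^ q))%C with (RtoC 0)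
        by (rewrite !RtoC_minus; cring). rewrite Cmod_0. auto.
    + match goal with |- context [Nat.eqb ?x ?y] => destruct (Nat.eqb_spec x y); [lia|] end.
      match goal with |- Cmod ?t <= _ => replace t with (RtoC 0) by cring end. rewrite Cmod_0. auto.
    + match goal with |- context [Nat.eqb ?x ?y] => destruct (Nat.eqb_spec x y); [lia|] end.
      match goal with |- Cmod ?t <= _ => replace t with (RtoC 0) by cring end. rewrite Cmod_0. auto.
    + destruct (Nat.eqb_spec (n + q) (m + p)).
      * replace (1 * a n m * RtoC (s1 ^ m - 1) - 1 * a n m * RtoC (s2 ^ m - 1) - 0)%C with (a n m * RtoC (s1 ^ m - s2 ^ m))%C
          by (rewrite !RtoC_minus; cring).
        destruct (Nat.lt_ge_cases m q).
        -- destruct m. rewrite !pow_O. replace (1 - 1) with 0 by ring. rewrite Cmult_0_r, Cmod_0. auto.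
           rewrite IH by lia. rewrite Cmult_0_l, Cmod_0. lra.
        -- assert (S q <= m)%nat by lia. rewrite Cmod_mult, Cmod_R.
           assert (s2 ^ m <= s1 ^ m) by (apply pow_incr; lra).
           assert (0 <= s2 ^ m) by (apply pow_le; lra).
           assert (s1 ^ m <= s1 ^ S q) by (apply pow_decr; [lra|lia]).
           rewrite Rabs_pos_eq by lra.
           assert (0 <= Cmod (a n m)) by apply Cmod_ge_0. assert (0 <= s1 ^ S q) by (apply pow_le; lra).
           apply Rle_trans with (Cmod (a n m) * (2 * s1 ^ S q)). apply Rmult_le_compat_l; lra. lra.
      * replace (0 * a n m * RtoC (s1 ^ m - 1) - 0 * a n m * RtoC (s2 ^ m - 1) - 0)%C with (RtoC 0) by cring. rewrite Cmod_0. auto.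
  - rewrite DR_scal. unfold dpsum_abs in HB. specialize (HB N).
    rewrite Cmod_R, Rabs_R1 in HB. apply Rmult_le_compat_l. apply Rmult_le_pos. lra. apply pow_le; lra. auto.
Qed.

Lemma arith_final A g1 g2 eta1 eta2 r B1 eps p q :
  0 <= A -> 0 < r -> r <= 1 -> 0 < eps -> 0 <= B1 -> (1 <= q)%nat ->
  r <= eps / (8 * B1 + 1) ->
  0 <= eta1 -> 0 <= eta2 ->
  A * ((r * r) ^ q - (r / 2 * (r / 2)) ^ q) <= g1 + g2 + 2 * (r * r) ^ S q * B1 ->
  r ^ p * g1 <= r ^ q * eta1 -> (r / 2) ^ p * g2 <= (r / 2) ^ q * eta2 ->
  eta1 <= 3 / 16 * eps * (r * r) ^ q * (r / 2) ^ p ->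
  eta2 <= 3 / 16 * eps * (r * r) ^ q * (r / 2) ^ p ->
  A <= eps.
Proof. intros HA Hr Hr1 He HB1 Hq Hre He1 He2 Hmain H1 H2 Ht1 Ht2.
  set (s := (r * r) ^ q) in *. assert (Hs: 0 < s) by (apply pow_lt; nra).
  set (t := (r / 2) ^ p) in *. assert (Ht: 0 < t) by (apply pow_lt; lra).
  assert (Htr: t <= r ^ p) by (apply pow_incr; lra).
  assert (Hrq: r ^ q <= 1) by (apply pow_le1; lra).
  assert (Hrq2: (r / 2) ^ q <= 1) by (apply pow_le1; lra).
  assert (Hrq0: 0 <= r ^ q) by (apply pow_le; lra).
  assert (Hrq20: 0 <= (r / 2) ^ q) by (apply pow_le; lra).
  set (tau := 3 / 16 * eps * s * t) in *.
  assert (Hg1: t * g1 <= tau).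
  { assert (r ^ p * g1 <= tau) by (eapply Rle_trans; [apply H1|]; nra).
    destruct (Rle_lt_dec 0 g1). nra. nra. }
  assert (Hg2: t * g2 <= tau).
  { eapply Rle_trans. apply H2. nra. }
  assert (Hsum: g1 + g2 <= 3 / 8 * eps * s).
  { apply Rmult_le_reg_l with t; auto. unfold tau in *. nra. }
  assert (Hs2: (r / 2 * (r / 2)) ^ q <= s / 4).
  { replace (r / 2 * (r / 2)) with (r * r * / 4) by field. rewrite Rpow_mult_distr. fold s.
    assert ((/ 4) ^ q <= / 4). { replace q with (1 + (q - 1))%nat by lia. rewrite pow_add.
      assert ((/4) ^ (q - 1) <= 1) by (apply pow_le1; lra). assert (0 <= (/4) ^ (q-1)) by (apply pow_le; lra).
      simpl. nra. }
    nra. }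
  assert (HBt: 2 * (r * r) ^ S q * B1 <= eps / 4 * s).
  { change ((r * r) ^ S q) with (r * r * (r * r) ^ q). fold s.
    assert (r * B1 <= eps / 8).
    { apply Rle_trans with (eps / (8 * B1 + 1) * B1). apply Rmult_le_compat_r; auto.
      apply Rmult_le_reg_r with (8 * B1 + 1). lra.
      replace (eps / (8 * B1 + 1) * B1 * (8 * B1 + 1)) with (eps * B1) by (field; lra). nra. }
    assert (r * r * B1 <= r * B1) by (apply Rmult_le_compat_r; [auto|nra]).
    replace (2 * (r * r * s) * B1) with (2 * s * (r * r * B1)) by ring.
    apply Rle_trans with (2 * s * (eps / 8)). apply Rmult_le_compat_l; lra. lra. }
  assert (A * (3 / 4 * s) <= A * (s - (r / 2 * (r / 2)) ^ q)) by nra.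
  nra.
Qed.

Lemma fin_eventually (P : nat -> nat -> Prop) L :
  (forall l, (l <= L)%nat -> exists N0, forall N, (N0 <= N)%nat -> P l N) ->
  exists N0, forall N, (N0 <= N)%nat -> forall l, (l <= L)%nat -> P l N.
Proof. induction L; intros H.
  - destruct (H 0%nat (le_n _)) as [N0 HN]. exists N0. intros N HN' l Hl. replace l with 0%nat by lia. auto.
  - destruct IHL as [N1 HN1]. intros; apply H; lia.
    destruct (H (S L) (le_n _)) as [N2 HN2]. exists (max N1 N2). intros N HN l Hl.
    destruct (Nat.eq_dec l (S L)). subst. apply HN2; lia. apply HN1; lia.
Qed.

Lemma Cmod_zeta r M l : 0 <= r -> Cmod (RtoC r * Cpw (om M) l)%C = r.
Proof. intros Hr. rewrite Cmod_mult, Cmod_Cpw, Cmod_om, pow1, Cmod_R, Rabs_pos_eq; lra. Qed.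

Lemma small_pow_half (B tau : R) : 0 <= B -> 0 < tau -> exists K, forall T, (K <= T)%nat -> B / 2 ^ T <= tau.
Proof. intros HB Ht.
  destruct (pow_lt_1_zero (/2) ltac:(rewrite Rabs_pos_eq; lra) (tau / (B + 1)) ltac:(apply Rdiv_lt_0_compat; lra)) as [K HK].
  exists K. intros T HT. specialize (HK T HT). rewrite Rabs_pos_eq in HK by (apply pow_le; lra).
  unfold Rdiv. rewrite <- pow_inv. apply Rle_trans with (B * (tau / (B + 1))). apply Rmult_le_compat_l; lra.
  apply Rmult_le_reg_r with (B + 1). lra. replace (B * (tau / (B + 1)) * (B + 1)) with (B * tau) by (field; lra). nra.
Qed.

Lemma coef_step (a : nat -> nat -> C)
  (Hentire : forall z w : C, exists B : R, forall N : nat, dpsum_abs a z w N <= B)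
  (HD : forall z, 0 < Cmod z <= 1 -> forall eps, 0 < eps -> exists N0, forall N, (N0 <= N)%nat -> Cmod (Dfun a z N) <= eps)
  p q : (1 <= q)%nat -> (forall n' m', (1 <= m')%nat -> (m' < q)%nat -> a n' m' = 0%C) -> a p q = 0%C.
Proof. intros Hq IH.
  assert (Hall: forall eps, 0 < eps -> Cmod (a p q) <= eps).
  { intros eps He.
    destruct (Hentire (RtoC 1) (RtoC 1)) as [B1 HB1].
    assert (HB10: 0 <= B1) by (eapply Rle_trans; [apply dpsum_abs_nonneg|apply (HB1 0%nat)]).
    set (r := Rmin (/2) (eps / (8 * B1 + 1))).
    assert (Hr0: 0 < r). { unfold r. apply Rmin_pos. lra. apply Rdiv_lt_0_compat; lra. }
    assert (Hr1: r <= /2) by apply Rmin_l. assert (Hre: r <= eps / (8 * B1 + 1)) by apply Rmin_r.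
    set (r2 := r / 2).
    destruct (Hentire (RtoC (2 * / r)) (RtoC (2 * / r))) as [Ba HBa].
    destruct (Hentire (RtoC (2 * / r2)) (RtoC (2 * / r2))) as [Bb HBb].
    assert (HBa0: 0 <= Ba) by (eapply Rle_trans; [apply dpsum_abs_nonneg|apply (HBa 0%nat)]).
    assert (HBb0: 0 <= Bb) by (eapply Rle_trans; [apply dpsum_abs_nonneg|apply (HBb 0%nat)]).
    set (tau := 3 / 16 * eps * (r * r) ^ q * (r / 2) ^ p).
    assert (Htau: 0 < tau). { unfold tau. assert (0 < (r * r) ^ q) by (apply pow_lt; nra).
      assert (0 < (r / 2) ^ p) by (apply pow_lt; lra).
      apply Rmult_lt_0_compat; [apply Rmult_lt_0_compat; [lra|]|]; auto. }
    destruct (small_pow_half (Ba + Bb) (tau / 2) ltac:(lra) ltac:(lra)) as [K HK].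
    set (M := (K + p + q + 1)%nat). assert (HM: (0 < M)%nat) by (unfold M; lia).
    assert (HT: (K <= M - (p + q))%nat) by (unfold M; lia).
    specialize (HK _ HT).
    assert (H2p: 0 < 2 ^ (M - (p + q))) by (apply pow_lt; lra).
    assert (HBa': Ba / 2 ^ (M - (p + q)) <= tau / 2).
    { eapply Rle_trans; [|apply HK]. unfold Rdiv. apply Rmult_le_compat_r. left; apply Rinv_0_lt_compat; auto. lra. }
    assert (HBb': Bb / 2 ^ (M - (p + q)) <= tau / 2).
    { eapply Rle_trans; [|apply HK]. unfold Rdiv. apply Rmult_le_compat_r. left; apply Rinv_0_lt_compat; auto. lra. }
    destruct (fin_eventually (fun l N => Cmod (Dfun a (RtoC r * Cpw (om M) l)%C N) <= tau / 2) (M - 1)) as [Na HNa].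
    { intros l _. apply HD. rewrite Cmod_zeta; lra. lra. }
    destruct (fin_eventually (fun l N => Cmod (Dfun a (RtoC r2 * Cpw (om M) l)%C N) <= tau / 2) (M - 1)) as [Nb HNb].
    { intros l _. apply HD. rewrite Cmod_zeta; unfold r2; lra. lra. }
    set (N := max (max Na Nb) (max p q)).
    assert (G1 := radius_bound a r 2 Ba M p q N (tau / 2) ltac:(lra) ltac:(lra) HM HBa
                     (fun l Hl => HNa N ltac:(unfold N; lia) l Hl)).
    assert (G2 := radius_bound a r2 2 Bb M p q N (tau / 2) ltac:(unfold r2; lra) ltac:(lra) HM HBb
                     (fun l Hl => HNb N ltac:(unfold N; lia) l Hl)).
    assert (Hsq: 0 <= r / 2 * (r / 2) <= r * r) by nra.
    assert (DB := diff_bound a p q (r * r) (r / 2 * (r / 2)) B1 N Hsq ltac:(nra) ltac:(unfold N; lia) ltac:(unfold N; lia) IH HB1).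
    assert (Hmain: Cmod (a p q) * ((r * r) ^ q - (r / 2 * (r / 2)) ^ q) <=
       Cmod (Gs a p q (r * r) N) + Cmod (Gs a p q (r / 2 * (r / 2)) N) + 2 * (r * r) ^ S q * B1).
    { assert (Hpq: (r / 2 * (r / 2)) ^ q <= (r * r) ^ q) by (apply pow_incr; lra).
      rewrite <- (Rabs_pos_eq ((r * r) ^ q - (r / 2 * (r / 2)) ^ q)) by lra. rewrite <- Cmod_R, <- Cmod_mult.
      set (X := Gs a p q (r * r) N) in *. set (Y := Gs a p q (r / 2 * (r / 2)) N) in *.
      set (Z := (a p q * RtoC ((r * r) ^ q - (r / 2 * (r / 2)) ^ q))%C) in *.
      replace Z with (X - Y - (X - Y - Z))%C by cring.
      eapply Rle_trans. apply Cmod_triangle. rewrite Cmod_opp.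
      assert (Cmod (X - Y) <= Cmod X + Cmod Y).
      { unfold Cminus. eapply Rle_trans. apply Cmod_triangle. rewrite Cmod_opp. lra. }
      lra. }
    apply (arith_final (Cmod (a p q)) (Cmod (Gs a p q (r * r) N)) (Cmod (Gs a p q (r / 2 * (r / 2)) N))
             (tau / 2 + Ba / 2 ^ (M - (p + q))) (tau / 2 + Bb / 2 ^ (M - (p + q))) r B1 eps p q); auto; try lra.
    apply Cmod_ge_0. apply Rplus_le_le_0_compat. lra. apply Rdiv_le_0_compat; lra.
    apply Rplus_le_le_0_compat. lra. apply Rdiv_le_0_compat; lra.
    fold tau. lra. fold tau. lra. }
  apply Cmod_eq_0. apply Rle_antisym; [|apply Cmod_ge_0].
  destruct (Rle_lt_dec (Cmod (a p q)) 0); auto.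
  specialize (Hall (Cmod (a p q) / 2) ltac:(lra)). lra.
Qed.

Lemma ex_series_nonneg (b : nat -> R) B : (forall n, 0 <= b n) -> (forall N, SR b N <= B) -> ex_series b.
Proof. intros Hb HB.
  destruct (growing_cv (sum_f_R0 b)) as [l Hl].
  - intros n. simpl. specialize (Hb (S n)). lra.
  - exists B. intros x [i ->]. rewrite <- sum_n_Reals. apply HB.
  - exists l. apply is_series_Reals. exact Hl.
Qed.

Lemma sq_le_4pow n : INR n <= 2 ^ n.
Proof. induction n. simpl; lra. rewrite S_INR. simpl.
  assert (1 <= 2 ^ n) by (apply pow_R1_Rle; lra). lra. Qed.

Definition En (z h : C) n : C := (Cpw (z + h) n - Cpw z n - RtoC (INR n) * h * Cpw z (pred n))%C.

Lemma En_rec z h n : En z h (S n) = ((z + h) * En z h n + RtoC (INR n) * h * h * Cpw z (pred n))%C.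
Proof. unfold En. destruct n.
  - simpl pred. rewrite !Cpw_S, !Cpw_0. change (INR 1) with 1. change (INR 0) with 0. cring.
  - simpl pred. rewrite !Cpw_S, !S_INR, !RtoC_plus. cring.
Qed.

Lemma En_bound z h n : Cmod h <= 1 -> Cmod (En z h n) <= Cmod h ^ 2 * (INR n * INR n) * (Cmod z + 1) ^ n.
Proof. intros Hh. set (rho := Cmod z + 1). assert (Hz: 0 <= Cmod z) by apply Cmod_ge_0.
  assert (Hh0: 0 <= Cmod h) by apply Cmod_ge_0.
  induction n.
  - unfold En. simpl pred. rewrite !Cpw_0. change (INR 0) with 0.
    replace (1 - 1 - RtoC 0 * h * 1)%C with (RtoC 0) by cring. rewrite Cmod_0. simpl. lra.
  - rewrite En_rec. eapply Rle_trans. apply Cmod_triangle. rewrite !Cmod_mult, Cmod_R, Rabs_pos_eq by apply pos_INR.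
    rewrite Cmod_Cpw.
    assert (H1: Cmod (z + h) <= rho) by (unfold rho; eapply Rle_trans; [apply Cmod_triangle|lra]).
    assert (H2: Cmod z ^ pred n <= rho ^ n).
    { apply Rle_trans with (rho ^ pred n). apply pow_incr; unfold rho; lra. apply Rle_pow; unfold rho; [lra|lia]. }
    assert (Hr1: 1 <= rho) by (unfold rho; lra).
    assert (0 <= rho ^ n) by (apply pow_le; lra).
    assert (0 <= INR n) by apply pos_INR.
    assert (0 <= Cmod (En z h n)) by apply Cmod_ge_0.
    assert (0 <= Cmod z ^ pred n) by (apply pow_le; lra).
    rewrite S_INR. change (rho ^ S n) with (rho * rho ^ n).
    set (X := Cmod (En z h n)) in *. set (hh := Cmod h) in *.
    assert (A1: Cmod (z + h) * X <= rho * (hh ^ 2 * (INR n * INR n) * rho ^ n)).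
    { apply Rmult_le_compat; auto. apply Cmod_ge_0. }
    assert (A2: INR n * hh * hh * Cmod z ^ pred n <= hh ^ 2 * INR n * rho ^ n).
    { simpl. replace (hh * (hh * 1) * INR n * rho ^ n) with ((INR n * hh * hh) * rho ^ n) by ring.
      apply Rmult_le_compat_l; auto. apply Rmult_le_pos; nra. }
    assert (A3: hh ^ 2 * INR n * rho ^ n <= hh ^ 2 * (2 * INR n + 1) * (rho * rho ^ n)).
    { assert (0 <= hh ^ 2) by (apply pow_le; lra). assert (rho ^ n <= rho * rho ^ n) by nra.
      apply Rmult_le_compat; try nra. }
    assert (0 <= hh ^ 2) by (apply pow_le; lra).
    nra.
Qed.

Lemma SC_first (f : nat -> C) N : (forall m, (1 <= m)%nat -> f m = 0%C) -> @eq C (SC f N) (f 0%nat).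
Proof. intros H. induction N. apply SC_0. rewrite SC_S, IHN, (H (S N)) by lia. cring. Qed.

Lemma dpsum_col (a : nat -> nat -> C) z w N : (forall n m, (1 <= m)%nat -> a n m = 0%C) ->
  dpsum a z w N = SC (fun n => a n 0%nat * Cpw z n)%C N.
Proof. intros H. change (dpsum a z w N) with (DS (fun n m => a n m * (Cpw z n * Cpw w m))%C N).
  unfold DS. apply SC_ext. intros n _. rewrite SC_first. rewrite Cpw_0. cring.
  intros m Hm. rewrite H by auto. cring. Qed.

Lemma col_bound (a : nat -> nat -> C)
  (Hentire : forall z w : C, exists B : R, forall N : nat, dpsum_abs a z w N <= B) rho :
  0 <= rho -> exists B, forall N, SR (fun n => Cmod (a n 0%nat) * rho ^ n) N <= B.
Proof. intros Hr. destruct (Hentire (RtoC rho) (RtoC rho)) as [B HB]. exists B. intros N.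
  eapply Rle_trans; [|apply (HB N)]. rewrite DR_dpsum_abs by auto. unfold DR. apply SR_le. intros n _.
  eapply Rle_trans; [|apply (SR_term (fun m => Cmod (a n m) * (rho ^ n * rho ^ m)) N 0%nat)].
  simpl. lra. intros. apply Rmult_le_pos. apply Cmod_ge_0. apply Rmult_le_pos; apply pow_le; auto. lia.
Qed.

Lemma INR_sq_le n : INR n * INR n <= 4 ^ n.
Proof. pose proof (sq_le_4pow n). assert (0 <= INR n) by apply pos_INR.
  replace (4 ^ n) with (2 ^ n * 2 ^ n) by (rewrite <- Rpow_mult_distr; f_equal; ring). nra. Qed.

Lemma series_deriv (c : nat -> C) (phi : C -> C)
  (Hb : forall rho, 0 <= rho -> exists B, forall N, SR (fun n => Cmod (c n) * rho ^ n) N <= B)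
  (Hc : forall z, filterlim (fun N => SC (fun n => c n * Cpw z n)%C N) eventually (locally (phi z)))
  (z : C) : ex_derive phi z.
Proof.
  set (rho := Cmod z + 1). assert (Hz0: 0 <= Cmod z) by apply Cmod_ge_0.
  destruct (Hb (4 * rho) ltac:(unfold rho; lra)) as [B4 HB4].
  assert (HB40: 0 <= B4). { eapply Rle_trans; [|apply (HB4 0%nat)]. rewrite SR_0. simpl.
    rewrite Rmult_1_r. apply Cmod_ge_0. }
  set (d := fun n => (c n * RtoC (INR n) * Cpw z (pred n))%C).
  assert (Hds: ex_series d).
  { apply (ex_series_le d (fun n => Cmod (c n) * (4 * rho) ^ n)).
    - intros n. change (norm (d n)) with (Cmod (d n)). unfold d. rewrite !Cmod_mult, Cmod_R, Rabs_pos_eq by apply pos_INR.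
      rewrite Cmod_Cpw. rewrite Rmult_assoc. apply Rmult_le_compat_l. apply Cmod_ge_0.
      assert (H1: INR n <= 4 ^ n). { eapply Rle_trans. apply sq_le_4pow. apply pow_incr. lra. }
      assert (H2: Cmod z ^ pred n <= rho ^ n).
      { apply Rle_trans with (rho ^ pred n). apply pow_incr; unfold rho; lra. apply Rle_pow; unfold rho; [lra|lia]. }
      rewrite Rpow_mult_distr. apply Rmult_le_compat; auto. apply pos_INR. apply pow_le; lra.
    - apply ex_series_nonneg with B4. intros n. apply Rmult_le_pos. apply Cmod_ge_0. apply pow_le; unfold rho; lra.
      apply HB4. }
  destruct Hds as [l Hl].
  pose proof (lim_C (sum_n d) l Hl) as Hl'.
  assert (key: forall y, Cmod (y - z) <= 1 -> Cmod (phi y - phi z - (y - z) * l)%C <= Cmod (y - z) ^ 2 * B4).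
  { intros y Hy. set (h := (y - z)%C) in *. apply le_epsilon. intros eps He.
    destruct (lim_C _ _ (Hc y) (eps / 3) ltac:(lra)) as [N1 HN1].
    destruct (lim_C _ _ (Hc z) (eps / 3) ltac:(lra)) as [N2 HN2].
    destruct (Hl' (eps / 3) ltac:(lra)) as [N3 HN3].
    set (N := max (max N1 N2) N3).
    specialize (HN1 N ltac:(unfold N; lia)). specialize (HN2 N ltac:(unfold N; lia)). specialize (HN3 N ltac:(unfold N; lia)).
    set (Py := SC (fun n => c n * Cpw y n)%C N) in *. set (Pz := SC (fun n => c n * Cpw z n)%C N) in *.
    set (Dd := sum_n d N) in *.
    assert (E1: (Py - Pz - h * Dd)%C = SC (fun n => c n * En z h n)%C N).
    { unfold Py, Pz, Dd. change (sum_n d N) with (SC d N).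
      rewrite <- SC_minus, <- SC_scal, <- SC_minus. apply SC_ext. intros n _. unfold d, En.
      replace (z + h)%C with y by (unfold h; cring). cring. }
    assert (E2: Cmod (SC (fun n => c n * En z h n)%C N) <= Cmod h ^ 2 * B4).
    { eapply Rle_trans. apply Cmod_SC.
      eapply Rle_trans. apply SR_le with (g := fun n => Cmod h ^ 2 * (Cmod (c n) * (4 * rho) ^ n)).
      - intros n _. rewrite Cmod_mult. pose proof (En_bound z h n Hy) as HE. fold rho in HE.
        assert (INR n * INR n * rho ^ n <= (4 * rho) ^ n).
        { rewrite Rpow_mult_distr. apply Rmult_le_compat_r. apply pow_le; unfold rho; lra. apply INR_sq_le. }
        assert (0 <= Cmod h ^ 2) by (apply pow_le, Cmod_ge_0). assert (0 <= Cmod (c n)) by apply Cmod_ge_0.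
        apply Rle_trans with (Cmod (c n) * (Cmod h ^ 2 * (INR n * INR n) * rho ^ n)).
        apply Rmult_le_compat_l; auto. 
        replace (Cmod (c n) * (Cmod h ^ 2 * (INR n * INR n) * rho ^ n)) with
           (Cmod h ^ 2 * (Cmod (c n) * (INR n * INR n * rho ^ n))) by ring.
        apply Rmult_le_compat_l; auto. apply Rmult_le_compat_l; auto.
      - rewrite SR_scal. apply Rmult_le_compat_l. apply pow_le, Cmod_ge_0. apply HB4. }
    replace (phi y - phi z - h * l)%C with ((Py - Pz - h * Dd) - (Py - phi y) + (Pz - phi z) + h * (Dd - l))%C by cring.
    assert (Cmod (h * (Dd - l))%C <= eps / 3).
    { rewrite Cmod_mult. assert (0 <= Cmod (Dd - l)) by apply Cmod_ge_0.
      assert (0 <= Cmod h) by apply Cmod_ge_0. change (Cmod (Dd - l) < eps / 3) in HN3. nra. }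
    rewrite E1 in *.
    set (U := SC (fun n => c n * En z h n)%C N) in *.
    assert (T1: Cmod (U - (Py - phi y) + (Pz - phi z) + h * (Dd - l))%C <=
       Cmod U + Cmod (Py - phi y) + Cmod (Pz - phi z) + Cmod (h * (Dd - l))%C).
    { eapply Rle_trans. apply Cmod_triangle. eapply Rle_trans. apply Rplus_le_compat_r. apply Cmod_triangle.
      unfold Cminus at 1. eapply Rle_trans. apply Rplus_le_compat_r. apply Rplus_le_compat_r. apply Cmod_triangle.
      rewrite Cmod_opp. lra. }
    lra. }
  exists l. split. apply is_linear_scal_l.
  intros x Hx. pose proof (@is_filter_lim_locally_unique C_AbsRing (AbsRing_NormedModule C_AbsRing) z x Hx) as Hx'. subst x.
  intros eps.
  assert (Hd: 0 < Rmin 1 (eps / (B4 + 1))). { apply Rmin_pos. lra. apply Rdiv_lt_0_compat. apply cond_pos. lra. }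
  exists (mkposreal _ Hd). intros y Hy. change (Cmod (y - z) < Rmin 1 (eps / (B4 + 1))) in Hy.
  change (norm (minus y z)) with (Cmod (y - z)).
  change (norm (minus (minus (phi y) (phi z)) (scal (minus y z) l))) with (Cmod (phi y - phi z - (y - z) * l)%C).
  assert (H1: Cmod (y - z) <= 1) by (pose proof (Rmin_l 1 (eps / (B4 + 1))); lra).
  assert (H2: Cmod (y - z) <= eps / (B4 + 1)) by (pose proof (Rmin_r 1 (eps / (B4 + 1))); lra).
  eapply Rle_trans. apply key; auto.
  assert (0 <= Cmod (y - z)) by apply Cmod_ge_0.
  assert (Cmod (y - z) * B4 <= eps).
  { apply Rle_trans with (eps / (B4 + 1) * B4). apply Rmult_le_compat_r; auto.
    pose proof (cond_pos eps). apply Rmult_le_reg_r with (B4 + 1). lra.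
    replace (eps / (B4 + 1) * B4 * (B4 + 1)) with (eps * B4) by (field; lra). nra. }
  simpl. nra.
Qed.

Theorem theorem5 (a : nat -> nat -> C) (phi : C -> C)
  (Hentire : forall z w : C, exists B : R, forall N : nat, dpsum_abs a z w N <= B)
  (Hphi : forall zeta : C,
      filterlim (dpsum a zeta (Cconj zeta)) eventually (locally (phi zeta)))
  (Hhull : forall zeta : C, Cmod zeta <= 1 ->
      in_proj_hull (fun p : C * C => exists t : C, Cmod t = 1 /\ p = (t, phi t))
                   (zeta, phi zeta)) :
  holomorphic_on (fun zeta : C => Cmod zeta < 1) phi.
Proof.
  assert (HD: forall z, 0 < Cmod z <= 1 -> forall eps, 0 < eps -> exists N0, forall N, (N0 <= N)%nat -> Cmod (Dfun a z N) <= eps).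
  { intros z Hz eps He.
    destruct (hull_lim a phi Hentire Hphi Hhull z Hz (eps / 2) ltac:(lra)) as [N1 H1].
    destruct (lim_C _ _ (Hphi z) (eps / 2) ltac:(lra)) as [N2 H2].
    exists (max N1 N2). intros N HN. rewrite Dfun_eq.
    specialize (H1 N ltac:(lia)). specialize (H2 N ltac:(lia)).
    replace (dpsum a z (Cconj z) N - Lsum a z N)%C with ((dpsum a z (Cconj z) N - phi z) + (phi z - Lsum a z N))%C by cring.
    eapply Rle_trans. apply Cmod_triangle. lra. }
  assert (Hz: forall m, (1 <= m)%nat -> forall n, a n m = 0%C).
  { intro m. induction m as [m IH] using (well_founded_induction Wf_nat.lt_wf). intros Hm n.
    apply (coef_step a Hentire HD n m Hm). intros n' m' H1 H2. apply IH; auto. }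
  intros z _. apply (series_deriv (fun n => a n 0%nat) phi).
  - intros rho Hr. apply col_bound; auto.
  - intros w. eapply filterlim_ext; [|apply (Hphi w)]. intros N. apply dpsum_col. auto.
Qed.
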